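(* Let $\psi(u,v)$ be a satisfiable conjunction of difference constraints between two integer variables $u,v$ such that every pair satisfying $\psi$ has $u\le v$ and $\psi(m,m)$ holds for every integer $m$ (i.e. $\psi$ contains $u\le v$ but no conjunct $u\le v-c$ with $c>0$). Let $n\ge3$. Then $\exists S_3,\dots,S_{n-1}.\ \bigwedge_{2\le i\le n-1}\Big(S_i=S_{i+1}\cup\{\min(S_i)\}\wedge\max(S_i)=\max(S_{i+1})\wedge\psi(\min(S_i),\min(S_{i+1}))\Big)$ is equivalent to $S_n\neq\emptyset\wedge S_n\subseteq S_2\wedge|S_2\setminus S_n|\le n-2\wedge\big(S_2\setminus S_n\neq\emptyset\rightarrow\max(S_2\setminus S_n)<\min(S_n)\big)\wedge\forall y,z.\ \big(\mathsf{succ}((S_2\setminus S_n)\cup\{\min(S_n)\},y,z)\rightarrow\psi(y,z)\big)$.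
   Context: Set variables range over finite subsets of $\mathbb{Z}$, integer variables over $\mathbb{Z}$; $\min,\max$ of the empty set are undefined and atoms containing undefined terms are false. $\mathsf{succ}(S,x,y)$ abbreviates $x\in S\wedge y\in S\wedge x<y\wedge\forall z\in S.\,(z\le x\vee y\le z)$. $|\cdot|$ is cardinality. *)

(* Defs.v *)
(* Finite subsets of Z are represented by [seq int],
   read up to membership (all notions below are invariant under =i). *)
From mathcomp Require Import all_boot all_order all_algebra.
Set Implicit Arguments. Unset Strict Implicit. Unset Printing Implicit Defensive.
Import Order.TTheory GRing.Theory Num.Theory.
Local Open Scope ring_scope.

Inductive dconstr : Type :=
  | DC_uv of int
  | DC_vu of int.

Definition dsat (d : dconstr) (u v : int) : Prop :=
  match d with
  | DC_uv c => u - v <= c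
  | DC_vu c => v - u <= c
  end.

Definition dconj := seq dconstr.

Definition psat (psi : dconj) (u v : int) : Prop :=
  foldr (fun d P => dsat d u v /\ P) True psi.

Definition is_min (S : seq int) (m : int) : Prop :=
  m \in S /\ forall x, x \in S -> m <= x.
Definition is_max (S : seq int) (m : int) : Prop :=
  m \in S /\ forall x, x \in S -> x <= m.

Definition setDi (S T : seq int) : seq int := [seq x <- S | x \notin T].
Definition cardi (S : seq int) : nat := size (undup S).

Definition succ (S : seq int) (x y : int) : Prop :=
  x \in S /\ y \in S /\ x < y /\ forall z, z \in S -> z <= x \/ y <= z.

(* One step of the chain, i in 2..n-1, with undefined-term atoms false:
   S_i = S_{i+1} ∪ {min S_i}  /\  max S_i = max S_{i+1}
   /\  psi(min S_i, min S_{i+1}). *)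
Definition chain_step (psi : dconj) (Si Si1 : seq int) : Prop :=
  (exists m, is_min Si m /\ Si =i m :: Si1) /\
  (exists a, is_max Si a /\ is_max Si1 a) /\
  (exists a b, is_min Si a /\ is_min Si1 b /\ psat psi a b).

(* Main.v *)
Require Import Defs.
From mathcomp Require Import all_boot all_order all_algebra zify.
Import Order.TTheory GRing.Theory Num.Theory.
Local Open Scope ring_scope.

Lemma ex_min (s : seq int) : s != [::] -> exists m, is_min s m.
Proof.
elim: s => // x [|y s] IH _.
  by exists x; split; [rewrite mem_seq1| move=> z; rewrite mem_seq1 => /eqP->].
have [m [Hm Hmin]] := IH isT.
case: (leP x m) => Hxm.
- exists x; split; first by rewrite inE eqxx.
  move=> z; rewrite inE => /orP[/eqP->|/Hmin]; [done| exact: le_trans].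
- exists m; split; first by rewrite inE Hm orbT.
  move=> z; rewrite inE => /orP[/eqP->|/Hmin]//; exact: ltW.
Qed.

Lemma ex_max (s : seq int) : s != [::] -> exists m, is_max s m.
Proof.
elim: s => // x [|y s] IH _.
  by exists x; split; [rewrite mem_seq1| move=> z; rewrite mem_seq1 => /eqP->].
have [m [Hm Hmin]] := IH isT.
case: (leP m x) => Hxm.
- exists x; split; first by rewrite inE eqxx.
  move=> z; rewrite inE => /orP[/eqP->|/Hmin]; [done| move=> h; exact: le_trans h Hxm].
- exists m; split; first by rewrite inE Hm orbT.
  move=> z; rewrite inE => /orP[/eqP->|/Hmin]//; exact: ltW.
Qed.

Lemma nonnil (s : seq int) x : x \in s -> s != [::].
Proof. by case: s. Qed.

Lemma is_min_uniq s a b : is_min s a -> is_min s b -> a = b.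
Proof.
move=> [Ha Ha'] [Hb Hb']; apply: le_anti; rewrite Ha' // Hb' //.
Qed.

Lemma is_min_eqi s s' a : s =i s' -> is_min s a -> is_min s' a.
Proof. by move=> E [H1 H2]; split; [rewrite -E | move=> x; rewrite -E; apply: H2]. Qed.
Lemma is_max_eqi s s' a : s =i s' -> is_max s a -> is_max s' a.
Proof. by move=> E [H1 H2]; split; [rewrite -E | move=> x; rewrite -E; apply: H2]. Qed.

Lemma chain_step_eqi psi A B A' B' :
  chain_step psi A B -> A =i A' -> B =i B' -> chain_step psi A' B'.
Proof.
move=> [[m [Hm HAB]] [[a [Ha1 Ha2]] [x [y [Hx [Hy Hp]]]]]] EA EB.
split; [|split].
- exists m; split; first exact: is_min_eqi Hm.
  by move=> z; rewrite -EA HAB !inE EB.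
- by exists a; split; [exact: is_max_eqi Ha1 | exact: is_max_eqi Ha2].
- by exists x, y; split; [exact: is_min_eqi Hx|split; [exact: is_min_eqi Hy|]].
Qed.

Lemma succ_sub L L' y z : succ L y z -> y \in L' -> z \in L' -> {subset L' <= L} ->
  succ L' y z.
Proof.
move=> [_ [_ [Hyz H]]] Hy Hz Hs; do 3!split => //.
by move=> w /Hs /H.
Qed.

Lemma cardi_sub A B : {subset A <= B} -> (cardi A <= cardi B)%N.
Proof.
move=> H; apply: uniq_leq_size; first exact: undup_uniq.
by move=> x; rewrite !mem_undup => /H.
Qed.

Arguments cardi_sub {A B}.
Lemma cardi_cons m A : (cardi (m :: A) <= (cardi A).+1)%N.
Proof. by rewrite /cardi /=; case: (m \in A). Qed.

Lemma mem_setDi x S T : (x \in setDi S T) = (x \in S) && (x \notin T).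
Proof. by rewrite mem_filter andbC. Qed.

Lemma mem_cat_cons (A Q : seq int) d x : (x \in A ++ d :: Q) = (x \in d :: (A ++ Q)).
Proof. rewrite in_cons !mem_cat in_cons; by case: (x \in A); case: (x == d). Qed.

Lemma forward_inv psi (n : nat) (Hn : (3 <= n)%N) (S2 : seq int) (S : nat -> seq int) :
  S 2%N = S2 ->
  (forall i : nat, (2 <= i)%N -> (i <= n.-1)%N -> chain_step psi (S i) (S i.+1)) ->
  forall t, (2 + t <= n)%N ->
  exists m, is_min (S (2+t)%N) m /\ {subset S (2+t)%N <= S2} /\
   (forall x, x \in setDi S2 (S (2+t)%N) -> x < m) /\
   (forall y z, succ (m :: setDi S2 (S (2+t)%N)) y z -> psat psi y z) /\
   (cardi (setDi S2 (S (2+t)%N)) <= t)%N.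
Proof.
move=> H2 Hch; elim=> [_|t IH Ht].
- have [_ [_ [a [b [Ha _]]]]] := Hch 2%N isT (ltac:(lia)).
  rewrite addn0 H2 in Ha *; exists a; split=> //; split=> //.
  have E : forall x, x \in setDi S2 S2 = false.
    by move=> x; rewrite mem_setDi; case: (x \in S2).
  split; first by move=> x; rewrite E.
  split.
    move=> y z [Hy [Hz [Hyz _]]]; move: Hy Hz; rewrite !inE !E !orbF.
    by move=> /eqP Hy /eqP Hz; move: Hyz; rewrite Hy Hz ltxx.
  rewrite leqn0; apply/eqP; apply/eqP; rewrite -leqn0.
  by rewrite -[0%N]/(cardi [::]); apply: cardi_sub => x; rewrite E.
- have Ht' : (2 + t <= n)%N by apply: leq_trans Ht; rewrite addnS.
  have [m [Hm [Hsub [Hlt [Hsc Hcard]]]]] := IH Ht'.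
  have Hi : (2 + t <= n.-1)%N by move: Ht; rewrite addnS; lia.
  have [[m0 [Hm0 HE]] [_ [a [b [Ha [Hb Hab]]]]]] := Hch _ (leq_addr _ _) Hi.
  have ? := is_min_uniq _ _ _ Hm0 Hm; subst m0.
  have ? := is_min_uniq _ _ _ Ha Hm; subst a.
  rewrite addnS; set A := S (2 + t)%N in HE Hm Hsub Hlt Hsc Hcard Ha Hm0 *.
  set B := S (2 + t).+1 in HE Hb *.
  have HBA : {subset B <= A} by move=> x Hx; rewrite HE inE Hx orbT.
  have Hmb : m <= b by case: Hm => _; apply; apply: HBA; case: Hb.
  exists b; split=> //; split; first by move=> x /HBA /Hsub.
  have HmS2 : m \in S2 by apply: Hsub; case: Hm.
  case: (boolP (m \in B)) => HmB.
  + have Eb : b = m by apply: le_anti; rewrite Hmb andbT; case: Hb => _; apply.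
    subst b.
    have ED : setDi S2 B =i setDi S2 A.
      by move=> x; rewrite !mem_setDi HE inE; case: (x =P m) => // ->; rewrite HmB.
    split; first by move=> x; rewrite ED; apply: Hlt.
    split.
      move=> y z Hs; have [Hy [Hz _]] := Hs; apply: Hsc; apply: succ_sub Hs _ _ _.
      * by move: Hy; rewrite !inE ED.
      * by move: Hz; rewrite !inE ED.
      * by move=> x; rewrite !inE ED.
    apply: leq_trans (cardi_sub _) (leq_trans Hcard (leqnSn _)).
    by move=> x; rewrite ED.
  + have ED : setDi S2 B =i m :: setDi S2 A.
      move=> x; rewrite inE !mem_setDi HE inE; case: (x =P m) => [->|] //=.
      by rewrite HmS2 HmB.
    have Hmb' : m < b.
      rewrite lt_neqAle Hmb andbT; apply/eqP => Emb; move: HmB; rewrite Emb.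
      by case: Hb => ->.
    split.
      move=> x; rewrite ED inE => /orP[/eqP->//|/Hlt h]; exact: lt_trans h Hmb'.
    split.
      move=> y z Hs.
      have Hs' := Hs; move: Hs' => [Hy [Hz [Hyz Hw]]].
      move: Hy Hz; rewrite !inE !ED !inE.
      case: (z =P b) => [Ezb|Nzb] Hy Hz.
      * subst z.
        have : m <= y by case: (Hw m); rewrite ?inE ?ED ?inE ?eqxx ?orbT // leNgt Hmb'.
        move: Hy => /orP[/eqP Eyb|/orP[/eqP -> //|/Hlt h]].
          by rewrite Eyb ltxx in Hyz.
        by rewrite leNgt h.
      * have Hz' : z \in m :: setDi S2 A by rewrite inE; move: Hz => /= ->.
        have Hzm : z <= m.
          move: Hz' ; rewrite inE => /orP[/eqP->//|/Hlt h]; exact: ltW.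
        apply: Hsc; apply: succ_sub Hs _ Hz' _.
        -- move: Hy => /orP[/eqP Eyb|] //.
           have := lt_le_trans Hyz (le_trans Hzm Hmb).
           by rewrite Eyb ltxx.
        -- move=> x Hx; rewrite inE ED; apply/orP; right; exact: Hx.
    apply: (leq_trans (cardi_sub (B:=m :: setDi S2 A) _)); first by move=> x; rewrite ED.
    by apply: leq_trans (cardi_cons m _) _; rewrite ltnS.
Qed.

Lemma backward psi (Hdiag : forall m, psat psi m m)
    (n : nat) (Hn : (3 <= n)%N) (S2 Sn : seq int) :
  ((exists x, x \in Sn) /\
   {subset Sn <= S2} /\
   (cardi (setDi S2 Sn) <= n - 2)%N /\
   ((exists x, x \in setDi S2 Sn) ->
      exists a b, is_max (setDi S2 Sn) a /\ is_min Sn b /\ a < b) /\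
   (forall y z : int,
      (exists m, is_min Sn m /\ succ (m :: setDi S2 Sn) y z) -> psat psi y z)) ->
  (exists S : nat -> seq int,
      S 2%N = S2 /\ S n = Sn /\
      forall i : nat, (2 <= i)%N -> (i <= n.-1)%N -> chain_step psi (S i) (S i.+1)).
Proof.
move=> [[x0 Hx0] [Hsub [Hcard [Hmx Hsc]]]].
have [b Hb] := ex_min _ (nonnil _ _ Hx0).
have [M HM] := ex_max _ (nonnil _ _ Hx0).
set D := sort <=%R (undup (setDi S2 Sn)).
have memD : forall x, (x \in D) = (x \in setDi S2 Sn).
  by move=> x; rewrite mem_sort mem_undup.
have HD : forall x, x \in D -> x < b.
  move=> x; rewrite memD => Hx.
  have [a [b' [[_ Ha] [Hb' Hab]]]] := Hmx (ex_intro _ x Hx).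
  rewrite (is_min_uniq _ _ _ Hb Hb'); exact: le_lt_trans (Ha x Hx) Hab.
have HsortD : sorted <%R D by rewrite sort_lt_sorted undup_uniq.
have HsortD' : sorted <=%R D by apply: sort_le_sorted.
have HsizeD : (size D <= n - 2)%N by rewrite size_sort.
pose mn j := if (j < size D)%N then nth 0 D j else b.
have Hbmin : forall x, x \in Sn -> b <= x by case: Hb.
have HbSn : b \in Sn by case: Hb.
have Tmin : forall j, is_min (Sn ++ drop j D) (mn j).
  move=> j; rewrite /mn; case: ltnP => Hj.
  - rewrite (drop_nth 0 Hj); split; first by rewrite mem_cat inE eqxx orbT.
    move=> x; rewrite mem_cat inE => /orP[/Hbmin h|/orP[/eqP->//|]].
      by apply: ltW; apply: lt_le_trans h; apply: HD; apply: mem_nth.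
    move=> /(nthP 0) [i Hi <-]; rewrite nth_drop; apply: ltW.
    rewrite size_drop in Hi.
    apply: (sorted_ltn_nth lt_trans) => //; rewrite ?inE /=; [by rewrite -ltn_subRL | by rewrite addSn ltnS leq_addr].
  - rewrite (drop_oversize Hj) cats0; exact: Hb.
have Tmax : forall j, is_max (Sn ++ drop j D) M.
  move=> j; case: HM => HM1 HM2; split; first by rewrite mem_cat HM1.
  move=> x; rewrite mem_cat => /orP[/HM2 //|/mem_drop /HD h].
  by apply: ltW; apply: lt_le_trans h (HM2 _ HbSn).
have Tstep : forall j, chain_step psi (Sn ++ drop j D) (Sn ++ drop j.+1 D).
  move=> j; split; [|split].
  - exists (mn j); split; first exact: Tmin.
    move=> x; rewrite /mn; case: ltnP => Hj.
      by rewrite (drop_nth 0 Hj); apply: mem_cat_cons.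
    rewrite !drop_oversize ?(leq_trans Hj) // cats0 inE.
    by case: (x =P b) => // ->; rewrite HbSn.
  - by exists M; split; apply: Tmax.
  - exists (mn j), (mn j.+1); split; first exact: Tmin.
    split; first exact: Tmin.
    rewrite /mn; case: (ltnP j (size D)) => Hj; last first.
      by rewrite ltnNge (leq_trans Hj) //.
    apply: Hsc; exists b; split=> //.
    have Hd : nth 0 D j \in D by apply: mem_nth.
    split; first by rewrite inE -memD Hd orbT.
    split.
      case: ltnP => Hj1; rewrite inE ?eqxx //.
      by apply/orP; right; rewrite -memD; apply: mem_nth.
    split.
      case: ltnP => Hj1; last exact: HD.
      by apply: (sorted_ltn_nth lt_trans) => //; rewrite inE.
    move=> w; rewrite inE => /orP[/eqP->|].
      by right; case: ltnP => Hj1 //; apply: ltW; apply: HD; apply: mem_nth.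
    rewrite -memD => /(nthP 0) [i Hi <-].
    case: (leqP i j) => Hij.
      by left; apply: (sorted_leq_nth le_trans lexx) => //; rewrite inE.
    right; rewrite (leq_ltn_trans Hij Hi).
    have Hj1 := leq_ltn_trans Hij Hi.
    by apply: (sorted_leq_nth le_trans lexx).
pose S i := if i == 2%N then S2 else if i == n then Sn else Sn ++ drop (i - 2) D.
have ES : forall i, (2 <= i)%N -> Sn ++ drop (i - 2) D =i S i.
  move=> i Hi x; rewrite /S; case: eqP => [->|_].
    rewrite subnn drop0 mem_cat memD mem_setDi.
    by case: (boolP (x \in Sn)) => [/Hsub ->|]; rewrite ?andbT.
  case: eqP => [->|//]; by rewrite drop_oversize // cats0.
exists S; split; first by [].
split; first by rewrite /S; case: eqP => [E|]; [rewrite E in Hn|rewrite eqxx].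
move=> i Hi Hin; apply: chain_step_eqi (Tstep (i - 2)%N) (ES i Hi) _.
have E : (i - 2).+1 = (i.+1 - 2)%N by lia.
by rewrite E; apply: ES; lia.
Qed.

Theorem mainTheorem7 (psi : dconj)
    (Hsat : exists u v, psat psi u v)
    (Hle : forall u v, psat psi u v -> u <= v)
    (Hdiag : forall m, psat psi m m)
    (n : nat) (Hn : (3 <= n)%N) (S2 Sn : seq int) :
  (exists S : nat -> seq int,
      S 2%N = S2 /\ S n = Sn /\
      forall i : nat, (2 <= i)%N -> (i <= n.-1)%N -> chain_step psi (S i) (S i.+1))
  <->
  ((exists x, x \in Sn) /\
   {subset Sn <= S2} /\
   (cardi (setDi S2 Sn) <= n - 2)%N /\
   ((exists x, x \in setDi S2 Sn) ->
      exists a b, is_max (setDi S2 Sn) a /\ is_min Sn b /\ a < b) /\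
   (forall y z : int,
      (exists m, is_min Sn m /\ succ (m :: setDi S2 Sn) y z) -> psat psi y z)).
Proof.
split; last exact: backward.
move=> [S [H2 [HSn Hch]]].
have Hle2 : (2 + (n - 2) <= n)%N by lia.
have [m [Hm [Hsub [Hlt [Hsc Hcard]]]]] := @forward_inv psi n Hn S2 S H2 Hch _ Hle2.
have E : (2 + (n - 2))%N = n by lia.
rewrite E HSn in Hm Hsub Hlt Hsc Hcard.
split; first by exists m; case: Hm.
split=> //; split=> //; split.
  move=> [x Hx]; have [a Ha] := ex_max _ (nonnil _ _ Hx).
  exists a, m; split=> //; split=> //; apply: Hlt; by case: Ha.
move=> y z [m' [Hm' Hs]]; apply: Hsc.
by rewrite (is_min_uniq _ _ _ Hm Hm').
Qed.
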